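(* Fix integers $d\geq 2$ and $n\geq d+2$. Let $X=\{x_i\}_{i\in[n]}$ be a configuration in the unit sphere $S^{d-1}\subseteq\mathbb{R}^d$, and suppose there exists a partition $[n]=A\sqcup B$ with $A,B$ nonempty such that $K:=\operatorname{conv}\{x_i\}_{i\in A}\cap\operatorname{conv}\{x_i\}_{i\in B}$ is nonempty and $0\notin K$. Then $\delta(X)<1$.
   Context: $[n]=\{1,\ldots,n\}$. For a configuration $X=\{x_i\}_{i\in[n]}$ in $S^{d-1}$, $\delta(X):=\min_{j\in[n]}\operatorname{dist}(x_j,\operatorname{conv}\{x_i\}_{i\in[n]\setminus\{j\}})$, with Euclidean distance. *)

(* Defs.v *)
From HB Require Import structures.
From mathcomp Require Import all_boot all_order all_algebra.
From mathcomp Require Import boolp classical_sets reals.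
Set Implicit Arguments. Unset Strict Implicit. Unset Printing Implicit Defensive.
Import Order.TTheory GRing.Theory Num.Theory.
Local Open Scope ring_scope.
Local Open Scope classical_set_scope.

Definition enorm (R : realType) (d : nat) (v : 'rV[R]_d) : R :=
  Num.sqrt (\sum_(k < d) v ord0 k ^+ 2).

Definition conv (R : realType) (d n : nat) (x : 'I_n -> 'rV[R]_d)
    (I : {set 'I_n}) : set 'rV[R]_d :=
  [set y | exists l : 'I_n -> R,
     (forall i, 0 <= l i) /\ (forall i, i \notin I -> l i = 0) /\
     \sum_(i < n) l i = 1 /\ y = \sum_(i < n) l i *: x i].

Definition dist_to (R : realType) (d : nat) (p : 'rV[R]_d) (S : set 'rV[R]_d) : R :=
  inf [set enorm (p - y) | y in S].

Definition delta (R : realType) (d n : nat) (x : 'I_n -> 'rV[R]_d) : R :=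
  inf (range (fun j : 'I_n => dist_to (x j) (conv x [set~ j]%SET))).

(* Main.v *)
Require Import Defs.
From HB Require Import structures.
From mathcomp Require Import all_boot all_order all_algebra.
From mathcomp Require Import boolp classical_sets reals.
From mathcomp Require Import ring lra.
Import Order.TTheory GRing.Theory Num.Theory.
Local Open Scope ring_scope.
Local Open Scope classical_set_scope.

Definition dotp {R : realType} {d : nat} (u v : 'rV[R]_d) : R :=
  \sum_(k < d) u ord0 k * v ord0 k.

Lemma enormE {R : realType} {d : nat} (v : 'rV[R]_d) :
  enorm v = Num.sqrt (dotp v v).
Proof. by rewrite /enorm /dotp; apply: congr1; apply: eq_bigr => k _; rewrite expr2. Qed.

Lemma dotp_ge0 {R : realType} {d : nat} (v : 'rV[R]_d) : 0 <= dotp v v.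
Proof. by apply: sumr_ge0 => k _; rewrite -expr2 sqr_ge0. Qed.

Lemma dotp_gt0 {R : realType} {d : nat} (v : 'rV[R]_d) : v != 0 -> 0 < dotp v v.
Proof.
move=> hv; rewrite lt_def dotp_ge0 andbT.
apply/negP => /eqP h; move/negP: hv; apply; apply/eqP/rowP => k.
have := @psumr_eq0P R _ xpredT (fun k => v ord0 k * v ord0 k)
  _ h k isT.
have : forall i : 'I_d, true -> 0 <= v ord0 i * v ord0 i.
  by move=> i _; rewrite -expr2 sqr_ge0.
by move=> H /(_ H); move/eqP; rewrite mulf_eq0 orbb mxE (ord1 ord0) => /eqP.
Qed.

Lemma dotpC {R : realType} {d : nat} (u v : 'rV[R]_d) : dotp u v = dotp v u.
Proof. by apply: eq_bigr => k _; rewrite mulrC. Qed.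

Lemma dotp_suml {R : realType} {d n : nat} (l : 'I_n -> R) (x : 'I_n -> 'rV[R]_d) v :
  dotp (\sum_(i < n) l i *: x i) v = \sum_(i < n) l i * dotp (x i) v.
Proof.
rewrite /dotp.
under eq_bigr => k _ do rewrite summxE mulr_suml.
rewrite exchange_big /=; apply: eq_bigr => i _.
by rewrite mulr_sumr; apply: eq_bigr => k _; rewrite mxE mulrA.
Qed.

Lemma dotp_sub {R : realType} {d : nat} (u v : 'rV[R]_d) :
  dotp (u - v) (u - v) = dotp u u - 2 * dotp u v + dotp v v.
Proof.
rewrite /dotp mulr_sumr -sumrN -!big_split /=; apply: eq_bigr => k _.
rewrite !mxE; ring.
Qed.

Lemma dist_to_ge0 {R : realType} {d : nat} (p : 'rV[R]_d) S : 0 <= dist_to p S.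
Proof.
rewrite /dist_to.
have [[y Sy]|hS] := pselect (S !=set0).
  apply: lb_le_inf; first by exists (enorm (p - y)); exists y.
  by move=> r [z _ <-]; rewrite /enorm sqrtr_ge0.
have -> : [set enorm (p - y) | y in S] = set0.
  by apply/seteqP; split => // r [z Sz _]; apply: hS; exists z.
by rewrite inf0.
Qed.

Theorem lemma3 (R : realType) (d n : nat) (x : 'I_n -> 'rV[R]_d)
  (hd : (2 <= d)%N) (hn : (d + 2 <= n)%N)
  (hsphere : forall i, enorm (x i) = 1)
  (A : {set 'I_n})
  (hA : (0 < #|A|)%N) (hB : (0 < #|(~: A)%SET|)%N)
  (hK : conv x A `&` conv x (~: A)%SET !=set0)
  (h0 : ~ (conv x A `&` conv x (~: A)%SET) 0) :
  delta x < 1.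
Proof.
case: hK => p [[l [l0 [lA [l1 pl]]]] [m [m0 [mB [m1 pm]]]]].
have pn0 : p != 0.
  by apply/eqP => hp; apply: h0; rewrite -hp; split; [exists l | exists m].
have Dgt0 := @dotp_gt0 _ _ p pn0.
have [i0 i0A] : exists i0, i0 \in A.
  by apply/set0Pn; rewrite -card_gt0.
case: (@arg_maxP _ _ _ i0 (mem A) (fun i => dotp (x i) p) i0A) => j jA jmax.
have hj : dotp p p <= dotp (x j) p.
  rewrite {1}pl dotp_suml.
  have -> : dotp (x j) p = \sum_(i < n) l i * dotp (x j) p by rewrite -mulr_suml l1 mul1r.
  apply: ler_sum => i _.
  have [iA|iA] := boolP (i \in A).
    by apply: ler_wpM2l => //; exact: jmax.
  by rewrite lA // !mul0r.
have hconv : conv x [set~ j]%SET p.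
  exists m; split => //; split => // i; rewrite !inE => /negPn /eqP ->.
  by apply: mB; rewrite inE negbK.
have hxj : dotp (x j) (x j) = 1.
  have := hsphere j; rewrite enormE => h.
  by rewrite -(sqr_sqrtr (dotp_ge0 (x j))) h expr1n.
have hlt : enorm (x j - p) < 1.
  rewrite enormE -sqrtr1 ltr_sqrt ?ltr01 // dotp_sub hxj.
  lra.
apply: (le_lt_trans _ hlt).
apply: (@le_trans _ _ (dist_to (x j) (conv x [set~ j]%SET))).
  apply: ge_inf; last by exists j.
  by exists 0 => _ [i _ <-]; apply: dist_to_ge0.
apply: ge_inf; last by exists p.
by exists 0 => _ [z _ <-]; rewrite /enorm sqrtr_ge0.
Qed.
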